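(* Let $F$ be a CNF formula with $n$ variables and clauses $C_1,\dots,C_m$, and let $A_F,B_F\subseteq\{0,1\}^m$ be defined as follows. Partition the variables into a first half $X_1$ and a second half $X_2$. For each assignment $\alpha$ to $X_1$, let $a^\alpha\in\{0,1\}^m$ have $a^\alpha_j=1$ iff $\alpha$ does not satisfy clause $C_j$ (no literal of $C_j$ over $X_1$ is made true by $\alpha$), and let $A_F=\{a^\alpha\}$; define $B_F$ analogously from assignments to $X_2$. Then $F$ is unsatisfiable if and only if there exists a monotone Boolean function $h\colon\{0,1\}^m\to\{0,1\}$ with $A_F\subseteq h^{-1}(1)$ and $\overline{B_F}\subseteq h^{-1}(0)$.
   Context: For $v\in\{0,1\}^m$, $\overline{v}$ is the vector obtained by flipping every coordinate, and $\overline{V}=\{\overline{v}:v\in V\}$. A Boolean function $h$ is monotone if $h(u)\ge h(v)$ whenever $u_i\ge v_i$ for all $i$. *)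

(* Defs.v *)
From mathcomp Require Import all_boot.
Set Implicit Arguments. Unset Strict Implicit. Unset Printing Implicit Defensive.

(* A literal is a pair (i, b) : 'I_n * bool;
   (i, true) is the literal x_i and (i, false) is the literal ~x_i. *)
Definition lit (n : nat) := ('I_n * bool)%type.
Definition clause (n : nat) := {set lit n}.
Definition cnf (n m : nat) := 'I_m -> clause n.

Definition assignment (n : nat) := {ffun 'I_n -> bool}.

Definition lit_true n (x : assignment n) (l : lit n) : bool := x l.1 == l.2.

Definition satisfiable n m (F : cnf n m) : Prop :=
  exists x : assignment n, forall j : 'I_m, exists2 l, l \in F j & lit_true x l.

Definition X1 (n : nat) : {set 'I_n} := [set i : 'I_n | i < n./2].
Definition X2 (n : nat) : {set 'I_n} := ~: X1 n.

(* a^alpha for an assignment alpha to the variables in X (values of alpha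
   outside X are ignored): coordinate j is 1 iff no literal of C_j over X is
   made true by alpha. *)
Definition avec n m (F : cnf n m) (X : {set 'I_n}) (alpha : assignment n)
  : {ffun 'I_m -> bool} :=
  [ffun j => ~~ [exists l in F j, (l.1 \in X) && lit_true alpha l]].

Definition AF n m (F : cnf n m) : {set {ffun 'I_m -> bool}} :=
  [set avec F (X1 n) alpha | alpha : assignment n].
Definition BF n m (F : cnf n m) : {set {ffun 'I_m -> bool}} :=
  [set avec F (X2 n) alpha | alpha : assignment n].

Definition flipv m (v : {ffun 'I_m -> bool}) : {ffun 'I_m -> bool} :=
  [ffun i => ~~ v i].

Definition monotone m (h : {ffun 'I_m -> bool} -> bool) : Prop :=
  forall u v : {ffun 'I_m -> bool}, (forall i, v i <= u i) -> h v <= h u.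

(* Main.v *)
Require Import Defs.
From mathcomp Require Import all_boot.

Lemma key {n m} (F : cnf n m) {alpha beta} :
  (forall j, avec F (X1 n) alpha j <= flipv (avec F (X2 n) beta) j) ->
  satisfiable F.
Proof.
move=> H.
exists [ffun i => if i \in X1 n then alpha i else beta i] => j.
have := H j; rewrite /flipv /avec !ffunE.
case: (boolP [exists l in F j, (l.1 \in X1 n) && lit_true alpha l]).
  case/existsP=> l /andP [lF /andP [lX lt]] _.
  by exists l => //; rewrite /lit_true ffunE lX.
case: (boolP [exists l in F j, (l.1 \in X2 n) && lit_true beta l]) => //.
case/existsP=> l /andP [lF /andP [lX lt]] _ _.
exists l => //; rewrite /lit_true ffunE.
by move: lX; rewrite /X2 in_setC => /negbTE ->.
Qed.

Theorem lemma18 (n m : nat) (F : cnf n m) :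
  ~ satisfiable F <->
  exists h : {ffun 'I_m -> bool} -> bool,
    [/\ monotone h,
        (forall a, a \in AF F -> h a = true) &
        (forall b, b \in BF F -> h (flipv b) = false)].
Proof.
split.
  move=> NS.
  exists (fun v : {ffun 'I_m -> bool} => [exists a in AF F, [forall i, a i <= v i]]); split.
  - move=> u v Huv.
    case: (boolP [exists a in AF F, [forall i, a i <= v i]]) => //.
    case/existsP=> a /andP [aA /forallP Ha].
    suff -> : [exists a in AF F, [forall i, a i <= u i]] by [].
    apply/existsP; exists a; rewrite aA /=; apply/forallP => i.
    exact: leq_trans (Ha i) (Huv i).
  - move=> a aA; apply/existsP; exists a; rewrite aA /=.
    by apply/forallP => i.
  - move=> b bB; apply/negbTE/negP => /existsP [a /andP [aA /forallP Ha]].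
    apply: NS.
    case/imsetP: aA => alpha _ ->{a} in Ha.
    case/imsetP: bB => beta _ ->{b} in Ha.
    exact: (key F Ha).
case=> h [hm hA hB] [x Hx].
have := hm (flipv (avec F (X2 n) x)) (avec F (X1 n) x).
rewrite hA; last by apply/imsetP; exists x.
rewrite hB; last by apply/imsetP; exists x.
suff: forall i, avec F (X1 n) x i <= flipv (avec F (X2 n) x) i.
  by move=> H /(_ H).
move=> j; rewrite /flipv /avec !ffunE.
case: (Hx j) => l lF lt.
case: (boolP (l.1 \in X1 n)) => lX.
  suff -> : [exists l in F j, (l.1 \in X1 n) && lit_true x l] by [].
  by apply/existsP; exists l; rewrite lF lX lt.
suff -> : [exists l in F j, (l.1 \in X2 n) && lit_true x l] by case: (~~ _).
by apply/existsP; exists l; rewrite lF /X2 in_setC lX lt.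
Qed.
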